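(* Let $n>1$ and let $t_1<\cdots<t_{n+1}$ be real nodes. Let $L=(\prod_{k=1}^{j-1}(t_i-t_k))_{1\le i,j\le n+1}$ be the collocation matrix of the Newton basis at these nodes and let $BD(L)=(b_{i,j})_{1\le i,j\le n+1}$ be the matrix with $b_{i,j}=0$ for $i<j$, $b_{i,i}=\prod_{k=1}^{i-1}(t_i-t_k)$, and $b_{i,j}=\prod_{k=1}^{j-1}\frac{t_i-t_{i-k}}{t_{i-1}-t_{i-k-1}}$ for $i>j$. Suppose the entries are computed in floating-point arithmetic with unit roundoff $u$, with $(4n-5)u<1$, by the following algorithms: Algorithm 1 (for $i>j$): for $i=2,\dots,n+1$, set $m_{i,1}:=1$ and for $j=2,\dots,i-1$ set $M:=\frac{t_i-t_{i-j+1}}{t_{i-1}-t_{i-j}}$ and $m_{i,j}:=m_{i,j-1}\cdot M$; then $b_{i,j}=m_{i,j}$. Algorithm 2 (for $i=j$): set $p_1:=1$; for $i=2,\dots,n+1$ set $p_i:=1$ and for $k=1,\dots,i-1$ set $p_i:=p_i\cdot(t_i-t_{i-k})$; then $b_{i,i}=p_i$. Let $\mathrm{fl}(b_{i,j})$ denote the computed values. Then $$\left|\frac{b_{i,j}-\mathrm{fl}(b_{i,j})}{b_{i,j}}\right|\le\gamma_{4n-5},\qquad 1\le j\le i\le n+1.$$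
   Context: Floating-point model: for elementary operations $\mathrm{op}\in\{+,-,\times,/\}$, $\mathrm{fl}(a\,\mathrm{op}\,b)=(a\,\mathrm{op}\,b)(1+\delta)^{\pm1}$ with $|\delta|\le u$. For $k\in\mathbb N$ with $ku<1$, $\gamma_k:=\frac{ku}{1-ku}$. *)

(* Defs.v *)
From Stdlib Require Import Reals Lra Lia.
Open Scope R_scope.

Definition gamma (u : R) (k : nat) : R := INR k * u / (1 - INR k * u).

Definition fp_model (u : R) (op fl : R -> R -> R) : Prop :=
  forall a b : R, exists d : R, Rabs d <= u /\
    (fl a b = op a b * (1 + d) \/ fl a b = op a b / (1 + d)).

Fixpoint prodR (f : nat -> R) (m : nat) : R :=
  match m with
  | O => 1
  | S m' => prodR f m' * f m
  end.

(* Exact entries b_{i,j} of BD(L), 1-based indices, nodes t 1 < ... < t (n+1). *)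
Definition bd_entry (t : nat -> R) (i j : nat) : R :=
  if Nat.ltb i j then 0
  else if Nat.eqb i j then prodR (fun k => t i - t k) (i - 1)
  else prodR (fun k => (t i - t (i - k)%nat) / (t (i - 1)%nat - t (i - k - 1)%nat)) (j - 1).

Fixpoint alg1 (fsub fmul fdiv : R -> R -> R) (t : nat -> R) (i j : nat) : R :=
  match j with
  | O => 1
  | S O => 1
  | S j' => fmul (alg1 fsub fmul fdiv t i j')
                 (fdiv (fsub (t i) (t (i - j')%nat))
                       (fsub (t (i - 1)%nat) (t (i - j' - 1)%nat)))
  end.

Fixpoint alg2_loop (fsub fmul : R -> R -> R) (t : nat -> R) (i k : nat) : R :=
  match k with
  | O => 1
  | S k' => fmul (alg2_loop fsub fmul t i k') (fsub (t i) (t (i - k)%nat))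
  end.

Definition alg2 (fsub fmul : R -> R -> R) (t : nat -> R) (i : nat) : R :=
  alg2_loop fsub fmul t i (i - 1).

Definition fl_bd (fsub fmul fdiv : R -> R -> R) (t : nat -> R) (i j : nat) : R :=
  if Nat.eqb i j then alg2 fsub fmul t i else alg1 fsub fmul fdiv t i j.

(* Main.v *)
Require Import Defs.
From Stdlib Require Import Reals Lra Lia.
Open Scope R_scope.

Definition okf (u : R) (k : nat) (r : R) := (1-u)^k <= r <= /(1-u)^k.

Section S.
Variable u : R.
Hypothesis hu0 : 0 <= u.
Hypothesis hu1 : u < 1.

Lemma pos_pow k : 0 < (1-u)^k.
Proof. apply pow_lt; lra. Qed.

Lemma pow_le1 k : (1-u)^k <= 1.
Proof. induction k; simpl; [lra|]. assert (0 <= (1-u)^k) by (left; apply pos_pow). nra. Qed.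

Lemma okf0 : okf u 0 1.
Proof. unfold okf; simpl; rewrite Rinv_1; lra. Qed.

Lemma okf_mul a b r s : okf u a r -> okf u b s -> okf u (a+b) (r*s).
Proof.
  unfold okf; intros [h1 h2] [h3 h4]; rewrite pow_add, Rinv_mult.
  pose proof (pos_pow a); pose proof (pos_pow b).
  split; apply Rmult_le_compat; try lra;
    try (left; apply pos_pow); try (left; apply Rinv_0_lt_compat, pos_pow).
Qed.

Lemma okf_inv k r : okf u k r -> okf u k (/r).
Proof.
  unfold okf; intros [h1 h2]; pose proof (pos_pow k).
  split.
  - rewrite <- (Rinv_inv ((1-u)^k)) at 1. apply Rinv_le_contravar; try lra.
  - apply Rinv_le_contravar; lra.
Qed.

Lemma okf_fac d : Rabs d <= u -> okf u 1 (1+d).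
Proof.
  intros h; pose proof (Rle_abs d); pose proof (Rle_abs (-d)); rewrite Rabs_Ropp in *. unfold okf; simpl; rewrite !Rmult_1_r.
  split; [lra|]. apply (Rle_trans _ (1+u)); [lra|].
  assert (/(1-u) = 1 + u + u*u/(1-u)) by (field; lra).
  rewrite H1. assert (0 <= u*u/(1-u)) by (unfold Rdiv; apply Rmult_le_pos; [nra| left; apply Rinv_0_lt_compat; lra]). lra.
Qed.

Lemma okf_mono a b r : (a <= b)%nat -> okf u a r -> okf u b r.
Proof.
  intros hab [h1 h2]. unfold okf. replace b with (a + (b-a))%nat by lia.
  rewrite pow_add. pose proof (pos_pow a). pose proof (pos_pow (b-a)).
  pose proof (pow_le1 (b-a)). split.
  - nra.
  - rewrite Rinv_mult. apply (Rle_trans _ _ _ h2).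
    rewrite <- (Rmult_1_r (/(1-u)^a)) at 1. apply Rmult_le_compat_l.
    + left; apply Rinv_0_lt_compat; lra.
    + assert (/1 <= /(1-u)^(b-a)) by (apply Rinv_le_contravar; lra).
      rewrite Rinv_1 in H2; exact H2.
Qed.

Lemma bern k : 1 - INR k * u <= (1-u)^k.
Proof.
  induction k; [simpl; lra|]. rewrite S_INR; simpl pow.
  pose proof (pos_vec := pos_pow k). pose proof (pos_INR k). nra.
Qed.

Lemma okf_final k r : INR k * u < 1 -> okf u k r -> Rabs (1 - r) <= gamma u k.
Proof.
  intros hk [h1 h2]. pose proof (bern k). pose proof (pos_INR k).
  unfold gamma. assert (0 <= INR k * u) by nra.
  apply Rabs_le; split.
  - assert (r <= /(1 - INR k * u)).
    { apply (Rle_trans _ _ _ h2). apply Rinv_le_contravar; lra. }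
    assert (E: - (INR k * u / (1 - INR k * u)) = 1 - /(1 - INR k * u)) by (field; lra).
    rewrite E. lra.
  - apply (Rle_trans _ (INR k * u)); [lra|].
    unfold Rdiv. rewrite <- (Rmult_1_r (INR k * u)) at 1.
    apply Rmult_le_compat_l; [lra|]. rewrite <- Rinv_1.
    apply Rinv_le_contravar; lra.
Qed.

Lemma fp_ok op fl : fp_model u op fl -> forall a b, exists r, okf u 1 r /\ fl a b = op a b * r.
Proof.
  intros h a b. destruct (h a b) as [d [hd [e|e]]].
  - exists (1+d); split; [apply okf_fac; auto| auto].
  - exists (/(1+d)); split; [apply okf_inv, okf_fac; auto| auto].
Qed.

End S.

Lemma prodR_shift (f : nat -> R) (m : nat) :
  prodR f (S m) = f 1%nat * prodR (fun k => f (S k)) m.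
Proof.
  induction m.
  - simpl. ring.
  - change (prodR f (S m) * f (S (S m)) = f 1%nat * (prodR (fun k => f (S k)) m * f (S (S m)))).
    rewrite IHm. ring.
Qed.

Lemma prodR_ext f g m : (forall k, f k = g k) -> prodR f m = prodR g m.
Proof. intros h; induction m; simpl; [auto| rewrite IHm, h; auto]. Qed.

Lemma prodR_rev f m : prodR f m = prodR (fun k => f (S m - k)%nat) m.
Proof.
  induction m; [reflexivity|].
  rewrite (prodR_shift (fun k => f (S (S m) - k)%nat)).
  change (prodR f m * f (S m) = f (S (S m) - 1)%nat * prodR (fun k => f (S (S m) - S k)%nat) m).
  rewrite IHm. replace (S (S m) - 1)%nat with (S m) by lia.
  rewrite Rmult_comm. f_equal.
Qed.

Section Alg.
Variables (u : R) (fsub fmul fdiv : R -> R -> R) (t : nat -> R).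
Hypothesis hu0 : 0 <= u.
Hypothesis hu1 : u < 1.
Hypothesis hsub : fp_model u Rminus fsub.
Hypothesis hmul : fp_model u Rmult fmul.
Hypothesis hdiv : fp_model u Rdiv fdiv.
Hypothesis hmul1 : forall x : R, fmul 1 x = x.

Lemma alg2_ok i k : exists r, okf u (2*k-1) r /\
  alg2_loop fsub fmul t i k = prodR (fun k => t i - t (i-k)%nat) k * r.
Proof.
  induction k.
  - exists 1; split; [apply okf0; auto| simpl; ring].
  - destruct (fp_ok u hu1 _ _ hsub (t i) (t (i - S k)%nat)) as [s [hs es]].
    destruct k.
    + exists s; split; [exact hs|]. simpl. rewrite hmul1, es. ring.
    + destruct IHk as [r [hr er]].
      change (alg2_loop fsub fmul t i (S (S k))) with
        (fmul (alg2_loop fsub fmul t i (S k)) (fsub (t i) (t (i - S (S k))%nat))).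
      rewrite er, es.
      destruct (fp_ok u hu1 _ _ hmul
        (prodR (fun k0 : nat => t i - t (i - k0)%nat) (S k) * r)
        ((t i - t (i - S (S k))%nat) * s)) as [q [hq eq]].
      exists (r * s * q); split.
      * replace (2 * S (S k) - 1)%nat with ((2 * S k - 1) + 1 + 1)%nat by lia.
        apply okf_mul; auto. apply okf_mul; auto.
      * rewrite eq. change (prodR (fun k0 : nat => t i - t (i - k0)%nat) (S (S k)))
          with (prodR (fun k0 : nat => t i - t (i - k0)%nat) (S k) * (t i - t (i - S (S k))%nat)).
        ring.
Qed.

Lemma div_ok A B r1 r2 k1 k2 : okf u k1 r1 -> okf u k2 r2 ->
  exists r, okf u (k1 + k2 + 1) r /\ fdiv (A * r1) (B * r2) = A / B * r.
Proof.
  intros h1 h2.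
  destruct (fp_ok u hu1 _ _ hdiv (A * r1) (B * r2)) as [q [hq eq]].
  exists (r1 * /r2 * q); split.
  - apply okf_mul; auto. apply okf_mul; auto. apply okf_inv; auto.
  - rewrite eq. unfold Rdiv. rewrite Rinv_mult. ring.
Qed.

Definition F1 i k := (t i - t (i - k)%nat) / (t (i - 1)%nat - t (i - k - 1)%nat).

Lemma alg1_ok i m : (1 <= m)%nat -> exists r, okf u (4*m-1) r /\
  alg1 fsub fmul fdiv t i (S m) = prodR (F1 i) m * r.
Proof.
  intros hm. induction m; [lia|].
  destruct (fp_ok u hu1 _ _ hsub (t i) (t (i - S m)%nat)) as [s1 [hs1 es1]].
  destruct (fp_ok u hu1 _ _ hsub (t (i-1)%nat) (t (i - S m - 1)%nat)) as [s2 [hs2 es2]].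
  destruct (div_ok (t i - t (i - S m)%nat) (t (i-1)%nat - t (i - S m - 1)%nat) s1 s2 1 1 hs1 hs2)
    as [d [hd ed]].
  change (alg1 fsub fmul fdiv t i (S (S m))) with
    (fmul (alg1 fsub fmul fdiv t i (S m))
       (fdiv (fsub (t i) (t (i - S m)%nat)) (fsub (t (i - 1)%nat) (t (i - S m - 1)%nat)))).
  rewrite es1, es2, ed.
  change (prodR (F1 i) (S m)) with (prodR (F1 i) m * F1 i (S m)).
  unfold F1 at 2.
  destruct m.
  - exists d; split; [exact hd|]. simpl alg1. rewrite hmul1. simpl. ring.
  - destruct IHm as [r [hr er]]; [lia|]. rewrite er.
    destruct (fp_ok u hu1 _ _ hmul (prodR (F1 i) (S m) * r)
       ((t i - t (i - S (S m))%nat) / (t (i - 1)%nat - t (i - S (S m) - 1)%nat) * d)) as [q [hq eq]].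
    exists (r * d * q); split.
    + replace (4 * S (S m) - 1)%nat with ((4 * S m - 1) + (1+1+1) + 1)%nat by lia.
      apply okf_mul; auto. apply okf_mul; auto.
    + rewrite eq. ring.
Qed.
End Alg.

Lemma fin_rel u K b r : 0 <= u -> u < 1 -> INR K * u < 1 -> okf u K r ->
  Rabs ((b - b * r) / b) <= gamma u K.
Proof.
  intros h0 h1 hk hr.
  assert (g0 : 0 <= gamma u K).
  { unfold gamma. pose proof (pos_INR K). unfold Rdiv. apply Rmult_le_pos; [nra|].
    left; apply Rinv_0_lt_compat; lra. }
  destruct (Req_dec b 0) as [->|hb].
  - unfold Rdiv. rewrite Rinv_0, Rmult_0_r, Rabs_R0. exact g0.
  - replace ((b - b * r) / b) with (1 - r) by (field; auto).
    apply okf_final; auto.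
Qed.

Theorem theorem3 (n : nat) (t : nat -> R) (u : R)
  (fsub fmul fdiv : R -> R -> R)
  (hn : (1 < n)%nat)
  (ht : forall i : nat, (1 <= i)%nat -> (i <= n)%nat -> t i < t (S i))
  (hsub : fp_model u Rminus fsub)
  (hmul : fp_model u Rmult fmul)
  (hdiv : fp_model u Rdiv fdiv)
  (hmul1 : forall x : R, fmul 1 x = x)
  (hu : INR (4 * n - 5) * u < 1) :
  forall i j : nat, (1 <= j)%nat -> (j <= i)%nat -> (i <= n + 1)%nat ->
    Rabs ((bd_entry t i j - fl_bd fsub fmul fdiv t i j) / bd_entry t i j)
      <= gamma u (4 * n - 5).
Proof.
  intros i j hj hji hin.
  assert (hu0 : 0 <= u).
  { destruct (hsub 0 0) as [d [hd _]]. pose proof (Rabs_pos d). lra. }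
  assert (h3 : 3 <= INR (4 * n - 5)).
  { replace 3 with (INR 3) by (simpl; ring). apply le_INR. lia. }
  assert (hu1 : u < 1) by nra.
  unfold bd_entry, fl_bd.
  replace (Nat.ltb i j) with false by (symmetry; apply Nat.ltb_ge; lia).
  destruct (Nat.eqb i j) eqn:E.
  - apply Nat.eqb_eq in E. subst j.
    unfold alg2. destruct (alg2_ok u fsub fmul t hu1 hsub hmul hmul1 i (i-1)) as [r [hr er]].
    rewrite er.
    rewrite (prodR_rev (fun k => t i - t k)).
    destruct i as [|i']; [lia|].
    replace (S (S i' - 1)) with (S i') by lia.
    apply fin_rel; auto. apply (okf_mono u hu0 hu1 (2 * (S i' - 1) - 1)); auto. lia.
  - apply Nat.eqb_neq in E.
    destruct j as [|m]; [lia|].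
    destruct m as [|m].
    + change (Rabs ((1 - 1) / 1) <= gamma u (4 * n - 5)). replace (1 - 1) with (1 - 1 * 1) by ring.
      apply fin_rel; auto. apply (okf_mono u hu0 hu1 0); [lia| apply okf0].
    + destruct (alg1_ok u fsub fmul fdiv t hu1 hsub hmul hdiv hmul1 i (S m)) as [r [hr er]]; [lia|].
      rewrite er. replace (S (S m) - 1)%nat with (S m) by lia.
      apply fin_rel; auto. apply (okf_mono u hu0 hu1 (4 * S m - 1)); auto. lia.
Qed.
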